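(* An orientation-preserving non-Carleman shift $\alpha:\mathbb{R}_+\to\mathbb{R}_+$ belongs to $SOS(\mathbb{R}_+)$ if and only if $\alpha(t)=te^{\omega(t)}$ for $t\in\mathbb{R}_+$, for some real-valued function $\omega\in SO(\mathbb{R}_+)\cap C^1(\mathbb{R}_+)$ such that the function $t\mapsto t\omega'(t)$ also belongs to $SO(\mathbb{R}_+)$ and $\inf_{t\in\mathbb{R}_+}(1+t\omega'(t))>0$.
   Context: $\mathbb{R}_+=(0,\infty)$. $C_b(\mathbb{R}_+)$: bounded continuous complex functions on $\mathbb{R}_+$. $SO(\mathbb{R}_+)$ is the set of $f\in C_b(\mathbb{R}_+)$ with $\lim_{r\to s}\sup\{|f(t)-f(\tau)|:t,\tau\in[\lambda r,r]\}=0$ for $s\in\{0,\infty\}$ and each (equivalently some) $\lambda\in(0,1)$. An orientation-preserving non-Carleman shift is an orientation-preserving diffeomorphism $\alpha$ of $\mathbb{R}_+$ onto itself with no fixed points in $\mathbb{R}_+$ (only fixed points $0$ and $\infty$). $SOS(\mathbb{R}_+)$ is the set of such shifts with $\log\alpha'\in C_b(\mathbb{R}_+)$ and $\alpha'\in SO(\mathbb{R}_+)$. *)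

(* Defs.v *)
From Stdlib Require Import Reals.
From Coquelicot Require Import Coquelicot.
Open Scope R_scope.

(* Functions on R_+ = (0,oo) are represented as total functions R -> R;
   only their values on (0,oo) matter. *)

Definition C1_Rplus (f : R -> R) : Prop :=
  forall t, 0 < t -> ex_derive f t /\ continuous (Derive f) t.

Definition Cb_Rplus (f : R -> R) : Prop :=
  (forall t, 0 < t -> continuous f t) /\
  (exists C, forall t, 0 < t -> Rabs (f t) <= C).

(* SO(R_+): lim_{r -> s} sup{|f t - f tau| : t,tau in [lam r, r]} = 0 for
   s in {0, oo} and each lam in (0,1); "sup <= eps eventually" written out. *)
Definition SO_Rplus (f : R -> R) : Prop :=
  Cb_Rplus f /\
  (forall lam, 0 < lam < 1 -> forall eps, 0 < eps ->
     exists delta, 0 < delta /\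
       forall r, 0 < r < delta -> forall t tau,
         lam * r <= t <= r -> lam * r <= tau <= r -> Rabs (f t - f tau) <= eps) /\
  (forall lam, 0 < lam < 1 -> forall eps, 0 < eps ->
     exists M, 0 < M /\
       forall r, M < r -> forall t tau,
         lam * r <= t <= r -> lam * r <= tau <= r -> Rabs (f t - f tau) <= eps).

Definition diffeo_Rplus (alpha : R -> R) : Prop :=
  (forall t, 0 < t -> 0 < alpha t) /\ C1_Rplus alpha /\
  exists beta : R -> R,
    (forall t, 0 < t -> 0 < beta t /\ beta (alpha t) = t /\ alpha (beta t) = t) /\
    C1_Rplus beta.

Definition op_nonCarleman_shift (alpha : R -> R) : Prop :=
  diffeo_Rplus alpha /\
  (forall t u, 0 < t -> 0 < u -> t < u -> alpha t < alpha u) /\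
  (forall t, 0 < t -> alpha t <> t).

Definition SOS_Rplus (alpha : R -> R) : Prop :=
  op_nonCarleman_shift alpha /\
  Cb_Rplus (fun t => ln (Derive alpha t)) /\
  SO_Rplus (Derive alpha).

(* Main.v *)
Require Import Defs.
From Stdlib Require Import Reals Lra.
From Coquelicot Require Import Coquelicot.
Open Scope R_scope.

Lemma loc_pos t : 0 < t -> locally t (fun s => 0 < s).
Proof.
  intros Ht. exists (mkposreal t Ht). intros s Hs.
  change (Rabs (s - t) < t) in Hs. apply Rabs_def2 in Hs. lra.
Qed.

Lemma cont_eps f x : continuous f x -> forall e, 0 < e ->
  exists d, 0 < d /\ forall y, Rabs (y - x) < d -> Rabs (f y - f x) < e.
Proof.
  intros Hc e He.
  destruct (proj1 (filterlim_locally f (f x)) Hc (mkposreal e He)) as [d Hd].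
  exists d; split; [apply cond_pos|]. intros y Hy. apply (Hd y Hy).
Qed.

Lemma mvt f a b : 0 < a -> a < b -> (forall x, 0 < x -> ex_derive f x) ->
  exists c, a <= c <= b /\ f b - f a = Derive f c * (b - a).
Proof.
  intros Ha Hab Hd.
  destruct (MVT_gen f a b (Derive f)) as [c [Hc Heq]].
  - intros x Hx. apply Derive_correct, Hd.
    rewrite Rmin_left in Hx by lra. lra.
  - intros x Hx. apply continuity_pt_filterlim. apply (ex_derive_continuous (K:=R_AbsRing) (V:=R_NormedModule) f x). apply Hd.
    rewrite Rmin_left in Hx by lra. lra.
  - exists c. rewrite Rmin_left, Rmax_right in Hc by lra. split; auto.
Qed.

Lemma exp_lip a b C : a <= C -> b <= C -> Rabs (exp a - exp b) <= exp C * Rabs (a - b).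
Proof.
  assert (K: forall a b, a <= b -> b <= C -> exp b - exp a <= exp C * (b - a)).
  { intros x y Hxy HyC. pose proof (exp_ineq1_le (x - y)).
    assert (exp x = exp y * exp (x - y)) by (rewrite <- exp_plus; f_equal; ring).
    assert (exp y <= exp C) by (destruct (Req_dec y C); [subst; lra| left; apply exp_increasing; lra]).
    pose proof (exp_pos y). rewrite H0. nra. }
  assert (M: forall x y, x <= y -> exp x <= exp y).
  { intros x y Hxy. destruct (Req_dec x y); [subst; lra| left; apply exp_increasing; lra]. }
  intros Ha Hb. destruct (Rle_dec a b).
  - rewrite (Rabs_left1 (exp a - exp b)) by (pose proof (M a b r); lra).
    rewrite (Rabs_left1 (a - b)) by lra. specialize (K a b r Hb). lra.
  - rewrite (Rabs_right (exp a - exp b)) by (pose proof (M b a ltac:(lra)); lra).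
    rewrite (Rabs_right (a - b)) by lra. specialize (K b a ltac:(lra) Ha). lra.
Qed.
Definition osc0 (f : R -> R) : Prop :=
  forall lam, 0 < lam < 1 -> forall eps, 0 < eps ->
     exists delta, 0 < delta /\
       forall r, 0 < r < delta -> forall t tau,
         lam * r <= t <= r -> lam * r <= tau <= r -> Rabs (f t - f tau) <= eps.
Definition oscI (f : R -> R) : Prop :=
  forall lam, 0 < lam < 1 -> forall eps, 0 < eps ->
     exists M, 0 < M /\
       forall r, M < r -> forall t tau,
         lam * r <= t <= r -> lam * r <= tau <= r -> Rabs (f t - f tau) <= eps.

Lemma comb_bound (h f g : R -> R) K t tau e1 e2 : 0 <= K ->
  Rabs (h t - h tau) <= K * Rabs (f t - f tau) + K * Rabs (g t - g tau) ->
  Rabs (f t - f tau) <= e1 -> Rabs (g t - g tau) <= e2 ->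
  Rabs (h t - h tau) <= K * e1 + K * e2.
Proof. intros. nra. Qed.

Lemma osc0_comb (h f g : R -> R) K : 0 <= K ->
  (forall t tau, 0 < t -> 0 < tau ->
     Rabs (h t - h tau) <= K * Rabs (f t - f tau) + K * Rabs (g t - g tau)) ->
  osc0 f -> osc0 g -> osc0 h.
Proof.
  intros HK Hb Hf Hg lam Hl eps He.
  set (e := eps / (2 * K + 1)).
  assert (He' : 0 < e) by (unfold e; apply Rdiv_lt_0_compat; lra).
  assert (HKe : K * e + K * e <= eps).
  { unfold e. apply (Rmult_le_reg_r (2*K+1)); [lra|].
    field_simplify; [|lra]. nra. }
  destruct (Hf lam Hl e He') as [d1 [Hd1 H1]].
  destruct (Hg lam Hl e He') as [d2 [Hd2 H2]].
  exists (Rmin d1 d2). split; [apply Rmin_pos; auto|].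
  intros r Hr t tau Ht Htau.
  assert (0 < lam * r) by (apply Rmult_lt_0_compat; lra).
  pose proof (Rmin_l d1 d2). pose proof (Rmin_r d1 d2).
  eapply Rle_trans; [|apply HKe].
  apply (comb_bound h f g K t tau); [auto| apply Hb; lra | | ].
  apply (H1 r ltac:(lra) t tau Ht Htau).
  apply (H2 r ltac:(lra) t tau Ht Htau).
Qed.

Lemma oscI_comb (h f g : R -> R) K : 0 <= K ->
  (forall t tau, 0 < t -> 0 < tau ->
     Rabs (h t - h tau) <= K * Rabs (f t - f tau) + K * Rabs (g t - g tau)) ->
  oscI f -> oscI g -> oscI h.
Proof.
  intros HK Hb Hf Hg lam Hl eps He.
  set (e := eps / (2 * K + 1)).
  assert (He' : 0 < e) by (unfold e; apply Rdiv_lt_0_compat; lra).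
  assert (HKe : K * e + K * e <= eps).
  { unfold e. apply (Rmult_le_reg_r (2*K+1)); [lra|].
    field_simplify; [|lra]. nra. }
  destruct (Hf lam Hl e He') as [d1 [Hd1 H1]].
  destruct (Hg lam Hl e He') as [d2 [Hd2 H2]].
  exists (Rmax d1 d2). split; [apply (Rlt_le_trans _ d1); [auto|apply Rmax_l]|].
  intros r Hr t tau Ht Htau.
  pose proof (Rmax_l d1 d2). pose proof (Rmax_r d1 d2).
  assert (0 < lam * r) by (apply Rmult_lt_0_compat; lra).
  eapply Rle_trans; [|apply HKe].
  apply (comb_bound h f g K t tau); [auto| apply Hb; lra | | ].
  apply (H1 r ltac:(lra) t tau Ht Htau).
  apply (H2 r ltac:(lra) t tau Ht Htau).
Qed.

Lemma exp_mono x y : x <= y -> exp x <= exp y.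
Proof. intros. destruct (Req_dec x y); [subst; lra| left; apply exp_increasing; lra]. Qed.

Lemma cont_mult (f g : R -> R) x : continuous f x -> continuous g x ->
  continuous (fun y => f y * g y) x.
Proof. intros. apply (continuous_mult (K:=R_AbsRing) f g); auto. Qed.

Lemma backward (alpha : R -> R) (Halpha : op_nonCarleman_shift alpha) :
  (exists omega : R -> R,
    SO_Rplus omega /\ C1_Rplus omega /\
    SO_Rplus (fun t => t * Derive omega t) /\
    (exists c, 0 < c /\ forall t, 0 < t -> c <= 1 + t * Derive omega t) /\
    (forall t, 0 < t -> alpha t = t * exp (omega t))) -> SOS_Rplus alpha.
Proof.
  intros [w [[[Cw [C1 HC1]] [o0w oIw]] [HCw [[[Cg [C2 HC2]] [o0g oIg]] [[c [Hc Hcg]] Heq]]]]].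
  set (g := fun t => t * Derive w t).
  change (forall t, 0 < t -> Rabs (g t) <= C2) in HC2.
  change (osc0 g) in o0g. change (oscI g) in oIg.
  change (forall t, 0 < t -> c <= 1 + g t) in Hcg.
  change (osc0 w) in o0w. change (oscI w) in oIw.
  assert (HC2p : 0 <= C2) by (pose proof (HC2 1 Rlt_0_1); pose proof (Rabs_pos (g 1)); lra).
  assert (Hd : forall t, 0 < t -> Derive alpha t = exp (w t) * (1 + g t)).
  { intros t Ht.
    rewrite (Derive_ext_loc alpha (fun s => s * exp (w s))).
    - apply is_derive_unique. destruct (HCw t Ht) as [Hex _].
      auto_derive; auto. unfold g. change (Derive (fun x => w x) t) with (Derive w t). match goal with |- ?a = ?b => change (@eq R a b) end. ring.
    - apply (filter_imp (fun s => 0 < s)); [|apply loc_pos; auto].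
      intros s Hs. apply Heq; auto. }
  assert (Hdpos : forall t, 0 < t -> 0 < Derive alpha t).
  { intros t Ht. rewrite Hd by auto. apply Rmult_lt_0_compat; [apply exp_pos|].
    specialize (Hcg t Ht). lra. }
  assert (HcontD : forall t, 0 < t -> continuous (Derive alpha) t).
  { intros t Ht. destruct Halpha as [[_ [HC1a _]] _]. apply (HC1a t Ht). }
  assert (Hwb : forall t, 0 < t -> - C1 <= w t <= C1).
  { intros t Ht. specialize (HC1 t Ht). apply Rabs_le_between in HC1. auto. }
  assert (Hgb : forall t, 0 < t -> - C2 <= g t <= C2).
  { intros t Ht. specialize (HC2 t Ht). apply Rabs_le_between in HC2. auto. }
  split; [exact Halpha|]. split.
  - split.
    + intros t Ht. apply (continuous_comp (Derive alpha) ln); auto.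
      apply continuous_ln. auto.
    + exists (C1 + Rabs (ln c) + Rabs (ln (1 + C2))). intros t Ht.
      rewrite Hd by auto.
      specialize (Hcg t Ht). fold g in Hcg.
      rewrite ln_mult by (try apply exp_pos; lra). rewrite ln_exp.
      pose proof (ln_le c (1 + g t) Hc Hcg).
      pose proof (ln_le (1 + g t) (1 + C2) ltac:(lra) ltac:(specialize (Hgb t Ht); lra)).
      specialize (Hwb t Ht).
      pose proof (Rle_abs (ln (1 + C2))). pose proof (Rabs_pos (ln c)).
      pose proof (Rle_abs (- ln c)) as Hn. rewrite Rabs_Ropp in Hn.
      pose proof (Rabs_pos (ln (1 + C2))). apply Rabs_le_between. lra.
  - split; [split|split].
    + exact HcontD.
    + exists (exp C1 * (1 + C2)). intros t Ht. rewrite Hd by auto.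
      rewrite Rabs_mult, Rabs_right by (left; apply exp_pos).
      specialize (Hgb t Ht). specialize (Hwb t Ht).
      apply Rmult_le_compat; [left; apply exp_pos| apply Rabs_pos | apply exp_mono; lra|].
      pose proof (Rabs_pos (ln (1 + C2))). apply Rabs_le_between. lra.
    + apply (osc0_comb _ w g (exp C1 * (1 + C2))); auto.
      { pose proof (exp_pos C1). nra. }
      intros t tau Ht Htau. rewrite !Hd by auto.
      replace (exp (w t) * (1 + g t) - exp (w tau) * (1 + g tau)) with
        (exp (w t) * (g t - g tau) + (1 + g tau) * (exp (w t) - exp (w tau))) by ring.
      eapply Rle_trans; [apply Rabs_triang|]. rewrite !Rabs_mult.
      pose proof (exp_lip (w t) (w tau) C1 ltac:(specialize (Hwb t Ht); lra) ltac:(specialize (Hwb tau Htau); lra)).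
      rewrite (Rabs_right (exp (w t))) by (left; apply exp_pos).
      assert (exp (w t) <= exp C1) by (apply exp_mono; specialize (Hwb t Ht); lra).
      assert (Rabs (1 + g tau) <= 1 + C2) by (apply Rabs_le_between; specialize (Hgb tau Htau); lra).
      pose proof (Rabs_pos (g t - g tau)). pose proof (Rabs_pos (w t - w tau)).
      pose proof (Rabs_pos (1 + g tau)). pose proof (Rabs_pos (exp (w t) - exp (w tau))).
      pose proof (exp_pos C1). pose proof (exp_pos (w t)).
      assert (exp (w t) * Rabs (g t - g tau) <= exp C1 * (1 + C2) * Rabs (g t - g tau)).
      { apply Rmult_le_compat_r; auto. nra. }
      assert (Rabs (1 + g tau) * Rabs (exp (w t) - exp (w tau)) <= (1 + C2) * (exp C1 * Rabs (w t - w tau))).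
      { apply Rmult_le_compat; auto. }
      lra.
    + apply (oscI_comb _ w g (exp C1 * (1 + C2))); auto.
      { pose proof (exp_pos C1). nra. }
      intros t tau Ht Htau. rewrite !Hd by auto.
      replace (exp (w t) * (1 + g t) - exp (w tau) * (1 + g tau)) with
        (exp (w t) * (g t - g tau) + (1 + g tau) * (exp (w t) - exp (w tau))) by ring.
      eapply Rle_trans; [apply Rabs_triang|]. rewrite !Rabs_mult.
      pose proof (exp_lip (w t) (w tau) C1 ltac:(specialize (Hwb t Ht); lra) ltac:(specialize (Hwb tau Htau); lra)).
      rewrite (Rabs_right (exp (w t))) by (left; apply exp_pos).
      assert (exp (w t) <= exp C1) by (apply exp_mono; specialize (Hwb t Ht); lra).
      assert (Rabs (1 + g tau) <= 1 + C2) by (apply Rabs_le_between; specialize (Hgb tau Htau); lra).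
      pose proof (Rabs_pos (g t - g tau)). pose proof (Rabs_pos (w t - w tau)).
      pose proof (Rabs_pos (1 + g tau)). pose proof (Rabs_pos (exp (w t) - exp (w tau))).
      pose proof (exp_pos C1). pose proof (exp_pos (w t)).
      assert (exp (w t) * Rabs (g t - g tau) <= exp C1 * (1 + C2) * Rabs (g t - g tau)).
      { apply Rmult_le_compat_r; auto. nra. }
      assert (Rabs (1 + g tau) * Rabs (exp (w t) - exp (w tau)) <= (1 + C2) * (exp C1 * Rabs (w t - w tau))).
      { apply Rmult_le_compat; auto. }
      lra.
Qed.

Definition vanish0 (g : R -> R) : Prop :=
  forall e, 0 < e -> exists d, 0 < d /\ forall t, 0 < t < d -> Rabs (g t) <= e.
Definition vanishI (g : R -> R) : Prop :=
  forall e, 0 < e -> exists M, 0 < M /\ forall t, M < t -> Rabs (g t) <= e.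

Lemma vanish0_osc g : vanish0 g -> osc0 g.
Proof.
  intros Hv lam Hl eps He. destruct (Hv (eps/2) ltac:(lra)) as [d [Hd H]].
  exists d. split; auto. intros r Hr t tau Ht Htau.
  assert (0 < lam * r) by (apply Rmult_lt_0_compat; lra).
  pose proof (H t ltac:(lra)). pose proof (H tau ltac:(lra)).
  eapply Rle_trans; [apply Rabs_triang|]. rewrite Rabs_Ropp. lra.
Qed.

Lemma vanishI_osc g : vanishI g -> oscI g.
Proof.
  intros Hv lam Hl eps He. destruct (Hv (eps/2) ltac:(lra)) as [d [Hd H]].
  exists (d / lam). split; [apply Rdiv_lt_0_compat; lra|]. intros r Hr t tau Ht Htau.
  assert (d < lam * r).
  { apply (Rmult_lt_compat_l lam) in Hr; [|lra]. field_simplify in Hr; lra. }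
  pose proof (H t ltac:(lra)). pose proof (H tau ltac:(lra)).
  eapply Rle_trans; [apply Rabs_triang|]. rewrite Rabs_Ropp. lra.
Qed.

Lemma core_osc (f : R -> R) lam r theta :
  (forall x, 0 < x -> ex_derive f x) -> 0 < lam < 1 -> 0 < r -> 0 <= theta ->
  (forall x, lam * r <= x <= r -> Rabs (x * Derive f x) <= theta) ->
  forall t tau, lam * r <= t <= r -> lam * r <= tau <= r ->
  Rabs (f t - f tau) <= theta / lam.
Proof.
  intros Hd Hl Hr Hth Hb.
  assert (0 < lam * r) by (apply Rmult_lt_0_compat; lra).
  assert (K : forall t tau, lam * r <= t <= r -> lam * r <= tau <= r -> t < tau ->
            Rabs (f tau - f t) <= theta / lam).
  { intros t tau Ht Htau Hlt.
    destruct (mvt f t tau ltac:(lra) Hlt Hd) as [x [Hx Heq]].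
    rewrite Heq, Rabs_mult, (Rabs_right (tau - t)) by lra.
    specialize (Hb x ltac:(lra)). rewrite Rabs_mult, Rabs_right in Hb by lra.
    pose proof (Rabs_pos (Derive f x)).
    apply (Rmult_le_reg_l lam); [lra|].
    replace (lam * (theta / lam)) with theta by (field; lra).
    assert (lam * r * Rabs (Derive f x) <= x * Rabs (Derive f x)) by nra.
    nra. }
  intros t tau Ht Htau.
  destruct (Rtotal_order t tau) as [Hlt|[Heq|Hgt]].
  - rewrite Rabs_minus_sym. apply K; auto.
  - subst. unfold Rminus. rewrite Rplus_opp_r, Rabs_R0.
    apply Rdiv_le_0_compat; lra.
  - apply K; auto.
Qed.

Lemma vanish0_osc_f (f : R -> R) : (forall x, 0 < x -> ex_derive f x) ->
  vanish0 (fun t => t * Derive f t) -> osc0 f.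
Proof.
  intros Hd Hv lam Hl eps He.
  destruct (Hv (eps * lam) ltac:(nra)) as [d [Hdp H]].
  exists d. split; auto. intros r Hr t tau Ht Htau.
  replace eps with (eps * lam / lam) by (field; lra).
  apply (core_osc f lam r); auto; try lra; try nra.
  intros x Hx. assert (0 < lam * r) by (apply Rmult_lt_0_compat; lra).
  apply (H x). lra.
Qed.

Lemma vanishI_osc_f (f : R -> R) : (forall x, 0 < x -> ex_derive f x) ->
  vanishI (fun t => t * Derive f t) -> oscI f.
Proof.
  intros Hd Hv lam Hl eps He.
  destruct (Hv (eps * lam) ltac:(nra)) as [d [Hdp H]].
  exists (d / lam). split; [apply Rdiv_lt_0_compat; lra|]. intros r Hr t tau Ht Htau.
  assert (d < lam * r).
  { apply (Rmult_lt_compat_l lam) in Hr; [|lra]. field_simplify in Hr; lra. }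
  assert (0 < r) by nra.
  replace eps with (eps * lam / lam) by (field; lra).
  apply (core_osc f lam r); auto; try lra; try nra.
  intros x Hx. apply (H x). lra.
Qed.

Lemma forward (alpha : R -> R) (Halpha : op_nonCarleman_shift alpha) :
  SOS_Rplus alpha ->
  exists omega : R -> R,
    SO_Rplus omega /\ C1_Rplus omega /\
    SO_Rplus (fun t => t * Derive omega t) /\
    (exists c, 0 < c /\ forall t, 0 < t -> c <= 1 + t * Derive omega t) /\
    (forall t, 0 < t -> alpha t = t * exp (omega t)).
Proof.
  intros [_ [[Hlnc [C HC]] [[HcD [CD HCD]] [o0d oId]]]].
  change (osc0 (Derive alpha)) in o0d. change (oscI (Derive alpha)) in oId.
  destruct Halpha as [[Hpos [HC1a [beta [Hb HC1b]]]] [Hinc Hnf]].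
  assert (Hex : forall t, 0 < t -> ex_derive alpha t) by (intros t Ht; apply (HC1a t Ht)).
  assert (Hnz : forall t, 0 < t -> Derive alpha t <> 0).
  { intros t Ht.
    assert (H1 : is_derive (fun s => beta (alpha s)) t (scal (Derive alpha t) (Derive beta (alpha t)))).
    { apply (is_derive_comp (K:=R_AbsRing) (V:=R_NormedModule) beta alpha t); apply Derive_correct; [apply (HC1b _ (Hpos t Ht)) | apply (HC1a t Ht)]. }
    assert (H2 : is_derive (fun s => beta (alpha s)) t 1).
    { apply (is_derive_ext_loc (fun s => s)); [| auto_derive; auto].
      apply (filter_imp (fun s => 0 < s)); [|apply loc_pos; auto].
      intros s Hs. symmetry. apply Hb; auto. }
    apply is_derive_unique in H1. apply is_derive_unique in H2.
    rewrite H2 in H1. change (1 = Derive alpha t * Derive beta (alpha t)) in H1.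
    intros H0. rewrite H0 in H1. lra. }
  assert (Hdp : forall t, 0 < t -> 0 < Derive alpha t).
  { intros t Ht. destruct (Rlt_le_dec 0 (Derive alpha t)) as [|Hle]; auto. exfalso.
    assert (Hneg : Derive alpha t < 0) by (pose proof (Hnz t Ht); lra).
    destruct (cont_eps (Derive alpha) t (proj2 (HC1a t Ht)) (- Derive alpha t) ltac:(lra)) as [d [Hd Hc]].
    destruct (mvt alpha t (t + d/2) Ht ltac:(lra) Hex) as [x [Hx Heq]].
    specialize (Hc x ltac:(apply Rabs_def1; lra)). apply Rabs_def2 in Hc.
    pose proof (Hinc t (t+d/2) Ht ltac:(lra) ltac:(lra)). nra. }
  set (M := exp C). set (m := exp (- C)).
  assert (HM : 0 < M) by apply exp_pos. assert (Hm : 0 < m) by apply exp_pos.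
  assert (Hbd : forall t, 0 < t -> m <= Derive alpha t <= M).
  { intros t Ht. specialize (HC t Ht). apply Rabs_le_between in HC.
    rewrite <- (exp_ln (Derive alpha t)) by auto. split; apply exp_mono; lra. }
  assert (Hup : forall s, 0 < s -> alpha s <= M * s).
  { intros s Hs. apply Rle_plus_epsilon. intros e He. destruct (Hb e He) as [Hbp [_ Hab]].
    destruct (Rlt_le_dec (beta e) s) as [Hl|Hl].
    - destruct (mvt alpha (beta e) s Hbp Hl Hex) as [x [Hx Heq]]. rewrite Hab in Heq.
      pose proof (Hbd x ltac:(lra)).
      assert (Derive alpha x * (s - beta e) <= M * (s - beta e)) by (apply Rmult_le_compat_r; lra).
      nra.
    - assert (alpha s <= e).
      { destruct Hl as [Hl|Hl]. + rewrite <- Hab. left. apply Hinc; auto.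
        + rewrite <- Hab, Hl. lra. }
      nra. }
  assert (Hlo : forall s, 0 < s -> m * s <= alpha s).
  { intros s Hs. apply Rle_plus_epsilon. intros e He.
    set (d := Rmin (s/2) (e/m)).
    assert (Hd : 0 < d) by (apply Rmin_pos; [lra| apply Rdiv_lt_0_compat; lra]).
    assert (Hds : d < s) by (pose proof (Rmin_l (s/2) (e/m)); unfold d; lra).
    assert (Hmd : m * d <= e).
    { pose proof (Rmin_r (s/2) (e/m)). fold d in H.
      replace e with (m * (e/m)) by (field; lra). apply Rmult_le_compat_l; lra. }
    destruct (mvt alpha d s Hd Hds Hex) as [x [Hx Heq]].
    pose proof (Hbd x ltac:(lra)). pose proof (Hpos d Hd).
    assert (m * (s - d) <= Derive alpha x * (s - d)) by (apply Rmult_le_compat_r; lra).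
    nra. }
  set (w := fun s => ln (alpha s) - ln s).
  assert (Hwd : forall t, 0 < t -> is_derive w t (Derive alpha t / alpha t - / t)).
  { intros t Ht. pose proof (Hpos t Ht). unfold w. auto_derive.
    - repeat split; auto.
    - change (Derive (fun x => alpha x) t) with (Derive alpha t). match goal with |- ?a = ?b => change (@eq R a b) end. field. split; lra. }
  assert (Hwex : forall t, 0 < t -> ex_derive w t) by (intros t Ht; eexists; apply (Hwd t Ht)).
  assert (HDw : forall t, 0 < t -> Derive w t = Derive alpha t / alpha t - / t)
    by (intros t Ht; apply is_derive_unique, Hwd; auto).
  set (g := fun t => t * Derive w t).
  assert (Hga : forall t, 0 < t -> g t * alpha t = t * Derive alpha t - alpha t).
  { intros t Ht. pose proof (Hpos t Ht). unfold g. rewrite HDw by auto. field. split; lra. }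
  assert (Hkey : forall t, 0 < t -> forall eps, 0 < eps < 1 -> exists x, eps * t <= x <= t /\
     Rabs (alpha t - t * Derive alpha t) <= 2 * eps * M * t + t * Rabs (Derive alpha x - Derive alpha t)).
  { intros t Ht eps He.
    assert (0 < eps * t) by (apply Rmult_lt_0_compat; lra).
    destruct (mvt alpha (eps * t) t ltac:(lra) ltac:(nra) Hex) as [x [Hx Heq]].
    exists x. split; auto.
    pose proof (Hbd x ltac:(lra)). pose proof (Hpos _ H). pose proof (Hup _ H).
    replace (alpha t - t * Derive alpha t) with
      (alpha (eps * t) + (- (eps * t * Derive alpha x)) + t * (Derive alpha x - Derive alpha t))
      by (rewrite <- (Rplus_0_r (alpha t)), <- (Rminus_diag (alpha (eps * t))) at 1; nra).
    eapply Rle_trans; [apply Rabs_triang|].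
    eapply Rle_trans; [apply Rplus_le_compat_r; apply Rabs_triang|].
    rewrite Rabs_Ropp, (Rabs_mult t), (Rabs_right t) by lra.
    rewrite (Rabs_right (alpha (eps * t))) by lra.
    rewrite Rabs_right by nra.
    assert (eps * t * Derive alpha x <= eps * t * M) by (apply Rmult_le_compat_l; lra).
    nra. }
  assert (Hfin : forall t, 0 < t -> forall th, 0 <= th ->
     Rabs (alpha t - t * Derive alpha t) <= th * m * t -> Rabs (g t) <= th).
  { intros t Ht th Hth Hb'. pose proof (Hpos t Ht). pose proof (Hlo t Ht).
    assert (E : Rabs (g t) * alpha t = Rabs (alpha t - t * Derive alpha t)).
    { rewrite <- (Rabs_right (alpha t)) at 1 by lra. rewrite <- Rabs_mult, Hga by auto.
      apply Rabs_minus_sym. }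
    apply (Rmult_le_reg_r (alpha t)); auto. rewrite E.
    assert (th * (m * t) <= th * alpha t) by (apply Rmult_le_compat_l; lra). nra. }
  assert (Hgb : forall t, 0 < t -> Rabs (g t) <= 2 * M / m).
  { intros t Ht. apply Hfin; auto. { apply Rmult_le_pos; [lra| left; apply Rinv_0_lt_compat; lra]. }
    replace (2 * M / m * m * t) with (M * t + t * M) by (field; lra).
    pose proof (Hpos t Ht). pose proof (Hup t Ht). pose proof (Hbd t Ht).
    eapply Rle_trans; [apply Rabs_triang|]. rewrite Rabs_Ropp, Rabs_mult, !Rabs_right by nra.
    assert (t * Derive alpha t <= t * M) by (apply Rmult_le_compat_l; lra). lra. }
  assert (Hv0 : vanish0 g).
  { intros th Hth. set (eps := Rmin (1/2) (th * m / (4 * M))).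
    assert (He : 0 < eps) by (apply Rmin_pos; [lra| apply Rdiv_lt_0_compat; nra]).
    assert (He1 : eps < 1) by (pose proof (Rmin_l (1/2) (th * m / (4 * M))); unfold eps; lra).
    assert (He2 : 2 * eps * M <= th * m / 2).
    { pose proof (Rmin_r (1/2) (th * m / (4 * M))). fold eps in H.
      apply (Rmult_le_compat_l (2 * M)) in H; [|lra].
      replace (2 * M * (th * m / (4 * M))) with (th * m / 2) in H by (field; lra). lra. }
    destruct (o0d eps ltac:(lra) (th * m / 2) ltac:(nra)) as [d [Hd H]].
    exists d. split; auto. intros t Ht.
    destruct (Hkey t ltac:(lra) eps ltac:(lra)) as [x [Hx Hk]].
    assert (eps * t <= t) by nra.
    specialize (H t ltac:(lra) x t Hx ltac:(lra)).
    apply Hfin; [lra|lra|].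
    assert (t * Rabs (Derive alpha x - Derive alpha t) <= t * (th * m / 2)) by (apply Rmult_le_compat_l; lra).
    assert (2 * eps * M * t <= th * m / 2 * t) by (apply Rmult_le_compat_r; lra).
    nra. }
  assert (HvI : vanishI g).
  { intros th Hth. set (eps := Rmin (1/2) (th * m / (4 * M))).
    assert (He : 0 < eps) by (apply Rmin_pos; [lra| apply Rdiv_lt_0_compat; nra]).
    assert (He1 : eps < 1) by (pose proof (Rmin_l (1/2) (th * m / (4 * M))); unfold eps; lra).
    assert (He2 : 2 * eps * M <= th * m / 2).
    { pose proof (Rmin_r (1/2) (th * m / (4 * M))). fold eps in H.
      apply (Rmult_le_compat_l (2 * M)) in H; [|lra].
      replace (2 * M * (th * m / (4 * M))) with (th * m / 2) in H by (field; lra). lra. }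
    destruct (oId eps ltac:(lra) (th * m / 2) ltac:(nra)) as [d [Hd H]].
    exists d. split; auto. intros t Ht.
    destruct (Hkey t ltac:(lra) eps ltac:(lra)) as [x [Hx Hk]].
    assert (eps * t <= t) by nra.
    specialize (H t ltac:(lra) x t Hx ltac:(lra)).
    apply Hfin; [lra|lra|].
    assert (t * Rabs (Derive alpha x - Derive alpha t) <= t * (th * m / 2)) by (apply Rmult_le_compat_l; lra).
    assert (2 * eps * M * t <= th * m / 2 * t) by (apply Rmult_le_compat_r; lra).
    nra. }
  assert (HcDw : forall t, 0 < t -> continuous (Derive w) t).
  { intros t Ht.
    apply (continuous_ext_loc _ (fun s => Derive alpha s * / alpha s + - / s)).
    { apply (filter_imp (fun s => 0 < s)); [|apply loc_pos; auto].
      intros s Hs. rewrite HDw by auto. reflexivity. }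
    apply (continuous_plus (V:=R_NormedModule)).
    - apply cont_mult; [apply (HC1a t Ht)|].
      apply continuous_Rinv_comp; [|pose proof (Hpos t Ht); lra].
      apply (ex_derive_continuous (K:=R_AbsRing) (V:=R_NormedModule)). auto.
    - apply (continuous_opp (V:=R_NormedModule)). apply continuous_Rinv. lra. }
  exists w. split; [|split; [|split; [|split]]].
  - split; [split|split].
    + intros t Ht. apply (ex_derive_continuous (K:=R_AbsRing) (V:=R_NormedModule)). auto.
    + exists C. intros t Ht. unfold w. pose proof (Hpos t Ht).
      pose proof (ln_le (m * t) (alpha t) ltac:(nra) (Hlo t Ht)). pose proof (ln_le (alpha t) (M * t) H (Hup t Ht)).
      rewrite ln_mult in H0, H1 by lra. unfold m in H0. unfold M in H1. rewrite ln_exp in H0, H1.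
      apply Rabs_le_between. lra.
    + apply vanish0_osc_f; auto.
    + apply vanishI_osc_f; auto.
  - intros t Ht. split; auto.
  - split; [split|split].
    + intros t Ht. apply cont_mult; [apply continuous_id| auto].
    + exists (2 * M / m). exact Hgb.
    + apply vanish0_osc. exact Hv0.
    + apply vanishI_osc. exact HvI.
  - exists (m / M). split; [apply Rdiv_lt_0_compat; lra|].
    intros t Ht. change (m / M <= 1 + g t).
    pose proof (Hga t Ht). pose proof (Hpos t Ht). pose proof (Hup t Ht). pose proof (Hbd t Ht).
    assert (E : (1 + g t) * alpha t = t * Derive alpha t) by nra.
    assert (P : 0 < 1 + g t).
    { assert (0 < (1 + g t) * alpha t) by (rewrite E; nra). nra. }
    assert (m * t <= (1 + g t) * (M * t)).
    { assert ((1 + g t) * alpha t <= (1 + g t) * (M * t)) by (apply Rmult_le_compat_l; lra). nra. }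
    apply (Rmult_le_reg_r (M * t)); [nra|].
    replace (m / M * (M * t)) with (m * t) by (field; lra). lra.
  - intros t Ht. unfold w. pose proof (Hpos t Ht).
    unfold Rminus. rewrite exp_plus, exp_Ropp, !exp_ln by lra. field. lra.
Qed.

Theorem lemma2p2 (alpha : R -> R) (Halpha : op_nonCarleman_shift alpha) :
  SOS_Rplus alpha <->
  exists omega : R -> R,
    SO_Rplus omega /\ C1_Rplus omega /\
    SO_Rplus (fun t => t * Derive omega t) /\
    (exists c, 0 < c /\ forall t, 0 < t -> c <= 1 + t * Derive omega t) /\
    (forall t, 0 < t -> alpha t = t * exp (omega t)).
Proof.
  split; [apply forward; auto | apply backward; auto].
Qed.
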